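(* Let $K$ be a finite field of characteristic $p$ and order $q=p^n$, and let $s$ be a positive integer with $\gcd(s,q-1)=1$. Let $\gamma$ be a primitive element of $\mathbb{F}_p$, let $\sigma\in\mathrm{Gal}(\mathbb{Q}(\zeta)/\mathbb{Q})$ be the automorphism with $\sigma(\zeta)=\zeta^\gamma$, and let $\tau$ be the permutation of $\mathcal{W}_{K,s}$ obtained by restricting $\sigma$. Then the following quantities are all equal: (i) the order of the permutation $\tau$; (ii) the degree $[\mathbb{Q}(\mathcal{W}_{K,s}):\mathbb{Q}]$; (iii) the order of $\gamma^{1-1/s}$ in $\mathbb{F}_p^\times$, where $1/s$ denotes the inverse of $s$ modulo $p-1$; (iv) $(p-1)/\gcd(p-1,s-1)$. Moreover, if $m$ denotes this common value, then $m=1$ when $p=2$, and $p\equiv 1\pmod{2m}$ when $p>2$.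
   Context: $\zeta=\exp(2\pi i/p)$, $\psi(x)=\zeta^{\mathrm{Tr}(x)}$ where $\mathrm{Tr}\colon K\to\mathbb{F}_p$ is the absolute trace; for $u\in K$, $W_u=\sum_{x\in K}\psi(x^s-ux)$, and $\mathcal{W}_{K,s}=\{W_u:u\in K^\times\}$. It is known that $\sigma(W_u)=W_{\gamma^{1-1/s}u}$ for all $u\in K$ (with $1/s$ the inverse of $s$ modulo $p-1$), so $\sigma$ maps $\mathcal{W}_{K,s}$ to itself. *)

(* Defs.v *)
From HB Require Import structures.
From mathcomp Require Import all_boot all_order all_algebra all_field.
Set Implicit Arguments. Unset Strict Implicit. Unset Printing Implicit Defensive.
Import GRing.Theory Num.Theory.
Local Open Scope ring_scope.

(* Absolute trace K -> F_p, for #|K| = p^n:  Tr x = \sum_(i<n) x^(p^i).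
   Its value lies in the prime subfield {k%:R : k < p}. *)
Definition abs_trace (K : finFieldType) (p n : nat) (x : K) : K :=
  \sum_(i < n) x ^+ (p ^ i).

Definition trace_nat (K : finFieldType) (p n : nat) (x : K) : nat :=
  if [pick k : 'I_p | (k%:R : K) == abs_trace p n x] is Some k then nat_of_ord k else 0%N.

Definition psi (K : finFieldType) (p n : nat) (zeta : algC) (x : K) : algC :=
  zeta ^+ trace_nat p n x.

Definition Wsum (K : finFieldType) (p n s : nat) (zeta : algC) (u : K) : algC :=
  \sum_(x : K) psi p n zeta (x ^+ s - u * x).

Definition Wlist (K : finFieldType) (p n s : nat) (zeta : algC) : seq algC :=
  [seq Wsum p n s zeta u | u <- enum K & u != 0].

(* [Q(S) : Q] for a finite list S of algebraic numbers: the Q-dimension of a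
   number field generated over Q by (a copy of) S, as provided by
   num_field_exists. *)
Definition degQ (S : seq algC) : nat :=
  \dim {: projT1 (num_field_exists S)}%VS.

Definition perm_order_on (sig : algC -> algC) (S : seq algC) (m : nat) : Prop :=
  [/\ (0 < m)%N,
      (forall w, w \in S -> iter m sig w = w) &
      (forall k, (0 < k)%N -> (forall w, w \in S -> iter k sig w = w) -> (m <= k)%N)].

(* Main.v *)
Require Import Defs.
From HB Require Import structures.
From mathcomp Require Import all_boot all_order all_algebra all_field.
From mathcomp Require Import ring.
Import GRing.Theory Num.Theory.
Local Open Scope ring_scope.
Set Implicit Arguments. Unset Strict Implicit. Unset Printing Implicit Defensive.

Section FF.
Variables (K : finFieldType) (p n : nat).
Hypotheses (pr_p : prime p) (chK : p \in [pchar K]) (cardK : #|K| = (p ^ n)%N).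

Local Notation Tr := (@abs_trace K p n).

Lemma p_gt1 : (1 < p)%N. Proof. exact: prime_gt1. Qed.

Lemma natr_eqK a b : ((a%:R : K) == b%:R) = (a == b %[mod p]).
Proof.
wlog le_ab: a b / (a <= b)%N.
  move=> IH; case/orP: (leq_total a b) => [/IH //|/IH H].
  by rewrite eq_sym H eq_sym.
rewrite [in RHS]eq_sym eqn_mod_dvd // (dvdn_pcharf chK) natrB // subr_eq0; exact: eq_sym.
Qed.

Lemma frobX (x y : K) i : (x + y) ^+ (p ^ i) = x ^+ (p ^ i) + y ^+ (p ^ i).
Proof.
elim: i => [|i IH]; first by rewrite !expn0 !expr1.
by rewrite expnSr !exprM IH -!(pFrobenius_autE chK) rmorphD.
Qed.

Lemma TrD x y : Tr (x + y) = Tr x + Tr y.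
Proof. by rewrite /abs_trace -big_split; apply: eq_bigr => i _; rewrite frobX. Qed.

Lemma Tr0 : Tr 0 = 0.
Proof. by rewrite /abs_trace big1 // => i _; rewrite expr0n expn_eq0 eqn0Ngt prime_gt0. Qed.

Lemma TrMn x k : Tr (x *+ k) = Tr x *+ k.
Proof. by elim: k => [|k IH]; rewrite ?mulr0n ?Tr0 // !mulrS TrD IH. Qed.

Lemma Tr_frob x : (Tr x) ^+ p = Tr x.
Proof.
rewrite /abs_trace -(pFrobenius_autE chK) rmorph_sum /=.
under eq_bigr do rewrite pFrobenius_autE -exprM -expnSr.
case: n cardK => [|n'] cK; first by rewrite !big_ord0.
rewrite big_ord_recr big_ord_recl /= -cK expf_card expn0 expr1 addrC.
by congr (_ + _); apply: eq_bigr => i _.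
Qed.


Lemma prime_subfield (y : K) : y ^+ p = y -> exists2 k, (k < p)%N & y = k%:R.
Proof.
move=> yp; case: (pickP [pred k : 'I_p | y == k%:R]) => [k /eqP yk|nk].
  by exists k.
exfalso.
pose P : {poly K} := 'X^p - 'X.
have sP : size P = p.+1.
  by rewrite /P size_polyDl ?size_polyXn // size_polyN size_polyX ltnS p_gt1.
have Hnz : P != 0 by rewrite -size_poly_eq0 sP.
pose rs := y :: [seq (k%:R : K) | k <- iota 0 p].
have Hr : all (root P) rs.
  rewrite /= {1}/root /P hornerD hornerN hornerXn hornerX yp subrr eqxx /=.
  apply/allP => _ /mapP[k _ ->].
  by rewrite /root hornerD hornerN hornerXn hornerX -(pFrobenius_autE chK) rmorph_nat subrr.
have Hu : uniq rs.
  rewrite /= ; apply/andP; split.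
    apply/mapP => -[k]; rewrite mem_iota add0n => /andP[_ kp] yk.
    by have := nk (Ordinal kp); rewrite /= yk eqxx.
  rewrite map_inj_in_uniq ?iota_uniq // => a b.
  rewrite !mem_iota !add0n => /andP[_ ap] /andP[_ bp].
  by move/eqP; rewrite natr_eqK !modn_small // => /eqP.
have := max_poly_roots Hnz Hr Hu.
by rewrite sP /= size_map size_iota ltnn.
Qed.

Lemma trace_natE (x : K) : (trace_nat p n x)%:R = Tr x /\ (trace_nat p n x < p)%N.
Proof.
rewrite /trace_nat; case: pickP => [k /eqP -> | nk]; first by split.
have [k kp Hk] := prime_subfield (Tr_frob x).
by have := nk (Ordinal kp); rewrite /= Hk eqxx.
Qed.

Lemma trace_natR (x : K) : (trace_nat p n x)%:R = Tr x. Proof. by case: (trace_natE x). Qed.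
Lemma trace_nat_lt (x : K) : (trace_nat p n x < p)%N. Proof. by case: (trace_natE x). Qed.

Lemma trace_natD (x y : K) :
  trace_nat p n (x + y) = (trace_nat p n x + trace_nat p n y)%N %[mod p].
Proof. by apply/eqP; rewrite -natr_eqK natrD !trace_natR TrD. Qed.

Lemma trace_natM (g : nat) (x : K) :
  trace_nat p n (g%:R * x) = (g * trace_nat p n x)%N %[mod p].
Proof. by apply/eqP; rewrite -natr_eqK natrM !trace_natR mulr_natl TrMn mulr_natl. Qed.

Lemma trace_nat_eq0 (x : K) : (trace_nat p n x == 0%N) = (Tr x == 0).
Proof.
rewrite -trace_natR; have := natr_eqK (trace_nat p n x) 0.
by rewrite mod0n modn_small ?trace_nat_lt // => <-.
Qed.

Lemma n_gt0 : (0 < n)%N.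
Proof.
case: n cardK => // cK; have : (1 < #|K|)%N.
  by apply/card_gt1P; exists 0, 1; split => //; rewrite eq_sym oner_neq0.
by rewrite cK.
Qed.

Lemma size_TrP k : size (\sum_(i < k.+1) 'X^(p ^ i) : {poly K}) = (p ^ k).+1.
Proof.
elim: k => [|k IH]; first by rewrite big_ord1 expn0 size_polyXn.
rewrite big_ord_recr /= addrC size_polyDl size_polyXn // IH ltnS.
by rewrite ltn_exp2l // p_gt1.
Qed.

Lemma Tr_nonzero : exists y, Tr y != 0.
Proof.
case: (pickP (fun y => Tr y != 0)) => [y Hy|H]; first by exists y.
exfalso.
have Hn := n_gt0.
pose P : {poly K} := \sum_(i < n) 'X^(p ^ i).
have sP : size P = (p ^ n.-1).+1 by rewrite /P; case: n Hn => // n' _; exact: size_TrP.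
have nzP : P != 0 by rewrite -size_poly_eq0 sP.
have Hr : all (root P) (enum K).
  apply/allP => y _; rewrite /root /P horner_sum.
  have := H y; rewrite /= => /negbFE /eqP H0.
  by apply/eqP; rewrite -[RHS]H0 /abs_trace; apply: eq_bigr => i _; rewrite hornerXn.
have := max_poly_roots nzP Hr (enum_uniq _).
rewrite sP -cardE cardK ltnS; apply/negP; rewrite -ltnNge.
case: n Hn => // n' _ /=.
by rewrite expnS -[X in (X < _)%N]mul1n ltn_mul2r expn_gt0 prime_gt0 ?p_gt1.
Qed.

Variable zeta : algC.
Hypothesis prim : p.-primitive_root zeta.
Local Notation psi := (@psi K p n zeta).

Lemma psiD (x y : K) : psi (x + y) = psi x * psi y.
Proof.
by rewrite /psi -exprD -(prim_expr_mod prim) trace_natD (prim_expr_mod prim).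
Qed.

Lemma trace_nat0 : trace_nat p n (0 : K) = 0%N.
Proof. by apply/eqP; rewrite trace_nat_eq0 Tr0. Qed.

Lemma psi0 : psi 0 = 1.
Proof. by rewrite /psi trace_nat0. Qed.

Lemma psi_eq1 (x : K) : (psi x == 1) = (Tr x == 0).
Proof.
rewrite /psi -(prim_order_dvd prim) -trace_nat_eq0.
apply/idP/idP => [/dvdnP[k Hk]|/eqP->]; last exact: dvdn0.
have := trace_nat_lt x; rewrite Hk; case: k {Hk} => // k.
by rewrite mulSn ltnNge leq_addr.
Qed.

Lemma psi_sum (y : K) :
  \sum_(x : K) psi (y * x) = if y == 0 then #|K|%:R else 0.
Proof.
case: eqP => [->|/eqP nz].
  under eq_bigr do rewrite mul0r psi0.
  by rewrite sumr_const.
have [z Hz] := Tr_nonzero.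
pose x0 := y^-1 * z.
have Hyx0 : y * x0 = z by rewrite /x0 mulrA divff // mul1r.
set S := \sum_x _.
have E : S = S * psi z.
  rewrite {1}/S (reindex_inj (addIr x0)) /=.
  by under eq_bigr do rewrite mulrDr psiD Hyx0; rewrite mulr_suml.
move/eqP: E; rewrite -subr_eq0 -{1}[S]mulr1 -mulrBr mulf_eq0 subr_eq0.
by rewrite [1 == _]eq_sym psi_eq1 (negPf Hz) orbF => /eqP.
Qed.

Variable sigma : {rmorphism algC -> algC}.
Variable g : nat.
Hypothesis sz : sigma zeta = zeta ^+ g.

Lemma psi_sigma (x : K) : sigma (psi x) = psi (g%:R * x).
Proof.
by rewrite /psi rmorphXn sz -exprM -(prim_expr_mod prim) -trace_natM (prim_expr_mod prim).
Qed.

Variable s : nat.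
Local Notation W := (@Wsum K p n s zeta).

Lemma W_sigma (G d : K) : (forall x, sigma (psi x) = psi (G * x)) -> d != 0 ->
  G * d ^+ s = 1 -> forall u, sigma (W u) = W (G * d * u).
Proof.
move=> hs nzd hd u; rewrite /Wsum rmorph_sum /=.
rewrite (reindex_inj (mulfI nzd)) /=; apply: eq_bigr => x _; rewrite hs; congr psi.
rewrite exprMn mulrBr mulrA hd mul1r; ring.
Qed.

Lemma W_iter (c : K) : (forall u, sigma (W u) = W (c * u)) ->
  forall k u, iter k sigma (W u) = W (c ^+ k * u).
Proof.
move=> Hs; elim=> [|k IH] u; first by rewrite expr0 mul1r.
by rewrite iterS IH Hs mulrA -exprS.
Qed.

Lemma W_fourier (z : K) : \sum_u W u * psi (u * z) = #|K|%:R * psi (z ^+ s).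
Proof.
rewrite /Wsum; under eq_bigr do rewrite mulr_suml; rewrite exchange_big /=.
transitivity (\sum_x psi (x ^+ s) * \sum_u psi ((z - x) * u)).
  apply: eq_bigr => x _; rewrite mulr_sumr; apply: eq_bigr => u _.
  by rewrite -!psiD; congr psi; ring.
under eq_bigr do rewrite psi_sum.
rewrite (bigD1 z) //= subrr eqxx big1 ?addr0; first by rewrite mulrC.
by move=> x /negPf nx; rewrite subr_eq0 eq_sym nx mulr0.
Qed.

Hypotheses (cop : coprime s (p ^ n).-1) (s_gt0 : (0 < s)%N).

Lemma powK (y : K) k : y ^+ (k * (p ^ n).-1 + 1) = y.
Proof.
elim: k => [|k IH]; first by rewrite mul0n add0n expr1.
rewrite mulSn -addnA exprD IH -exprSr prednK ?expn_gt0 ?prime_gt0 //.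
by rewrite -cardK expf_card.
Qed.

Lemma s_inv : exists k, forall y : K, (y ^+ s) ^+ k = y.
Proof.
case: (egcdnP (p ^ n).-1 s_gt0) => km kn Hk _.
by exists km => y; rewrite -exprM mulnC Hk (eqP cop) powK.
Qed.

Lemma c_one (c : K) : c ^+ s = 1 -> c = 1.
Proof. by move=> H; have [k Hk] := s_inv; rewrite -(Hk c) H expr1n. Qed.

Lemma s_surj (y : K) : exists z, z ^+ s = y.
Proof. by have [k Hk] := s_inv; exists (y ^+ k); rewrite exprAC Hk. Qed.

Lemma W_scale_inj (c : K) : c != 0 -> (forall u, W (c * u) = W u) -> c = 1.
Proof.
move=> nzc Hc.
have nzK : (#|K|%:R : algC) != 0 by rewrite pnatr_eq0 -lt0n; apply/card_gt0P; exists 0.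
have E z : psi (z ^+ s) = psi ((c^-1 * z) ^+ s).
  have h1 := W_fourier z; have h2 := W_fourier (c^-1 * z).
  have : \sum_u W u * psi (u * z) = \sum_u W u * psi (u * (c^-1 * z)).
    rewrite (reindex_inj (mulfI (invr_neq0 nzc))) /=; apply: eq_bigr => u _.
    by rewrite -(Hc (c^-1 * u)) mulrA divff // mul1r mulrCA mulrA.
  by rewrite h1 h2 => /(mulfI nzK).
have E2 y : psi ((c^-1) ^+ s * y) = psi y.
  by have [z <-] := s_surj y; rewrite E exprMn.
set e := (c^-1) ^+ s in E2.
have He : e = 1.
  apply/eqP/negP => /negP ne1.
  have [z0 Hz0] := Tr_nonzero.
  have nz1 : e - 1 != 0 by rewrite subr_eq0.
  have : psi ((e - 1) * ((e - 1)^-1 * z0)) == 1.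
    by rewrite mulrBl mul1r psiD E2 -psiD subrr psi0.
  by rewrite mulrA divff // mul1r psi_eq1 (negPf Hz0).
by apply: c_one; move: He; rewrite /e exprVn => /eqP; rewrite invr_eq1 => /eqP.
Qed.

Lemma W_mem (u : K) : u != 0 -> W u \in Wlist K p n s zeta.
Proof.
move=> nz; rewrite /Wlist; apply/mapP.
exists u => //. by rewrite mem_filter nz mem_enum. Qed.

Lemma iter_fix_iff (c : K) : (forall u, sigma (W u) = W (c * u)) -> c != 0 ->
  forall k, (forall w, w \in Wlist K p n s zeta -> iter k sigma w = w) <-> c ^+ k = 1.
Proof.
move=> Hs nzc k; split => [H|H w /mapP[u _ ->]]; last by rewrite (W_iter Hs) H mul1r.
apply: W_scale_inj; first exact: expf_neq0.
move=> u; have [->|nzu] := eqVneq u 0; first by rewrite mulr0.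
by rewrite -(W_iter Hs) H // W_mem.
Qed.
End FF.

Lemma ker_exists (F : fieldType) r c (A : 'M[F]_(r, c)) :
  (c < r)%N -> exists2 v : 'rV_r, v != 0 & v *m A = 0.
Proof.
move=> lt_cr.
have : kermx A != 0.
  rewrite -mxrank_eq0 mxrank_ker subn_eq0 -ltnNge.
  exact: leq_ltn_trans (rank_leq_col A) lt_cr.
case: (pickP (fun i => row i (kermx A) != 0)) => [i Hi _|H].
  by exists (row i (kermx A)) => //; rewrite -row_mul mulmx_ker row0.
move/eqP; case; apply/row_matrixP => i; rewrite row0.
by apply/eqP; move: (H i) => /= /negbFE.
Qed.

Lemma dim_upper (L : fieldExtType rat) (f : {rmorphism L -> algC}) m
  (eta : 'I_m -> algC) :
  (forall y, exists a : 'rV[rat]_m, f y = \sum_j ratr (a 0 j) * eta j) ->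
  (\dim {:L} <= m)%N.
Proof.
move=> Hf; rewrite leqNgt; apply/negP => lt_md.
set d := \dim {:L} in lt_md.
have [A HA] := fin_all_exists (fun j : 'I_d => Hf (vbasis {:L})`_j).
pose M : 'M[rat]_(d, m) := \matrix_(j, i) A j 0 i.
have [v nzv Hv] := ker_exists M lt_md.
have Hfree := basis_free (vbasisP {:L}).
have : \sum_j v 0 j *: (vbasis {:L})`_j = 0.
  apply: (fmorph_inj f); rewrite rmorph0 rmorph_sum /=.
  under eq_bigr do rewrite rmorphZ_num HA mulr_sumr.
  rewrite exchange_big /=; apply: big1 => i _.
  rewrite (_ : \sum_j _ = ratr ((v *m M) 0 i) * eta i); first by rewrite Hv mxE rmorph0 mul0r.
  rewrite mxE rmorph_sum mulr_suml; apply: eq_bigr => j _.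
  by rewrite mxE mulrA rmorphM.
move/freeP: Hfree => Hfree /Hfree H0.
by move/eqP: nzv; apply; apply/rowP => j; rewrite mxE H0.
Qed.

Lemma dedekind (L R : fieldType) k (phi : 'I_k -> L -> R) (v : 'I_k -> R) :
  (forall i x y, phi i (x * y) = phi i x * phi i y) -> (forall i, phi i 1 = 1) ->
  (forall i j, i != j -> exists y, phi i y != phi j y) ->
  (forall x, \sum_i v i * phi i x = 0) -> forall i, v i = 0.
Proof.
elim: k phi v => [|k IH] phi v Hm H1 Hd Hs i; first by case: i.
case: k IH phi v Hm H1 Hd Hs i => [|k] IH phi v Hm H1 Hd Hs i.
  by have := Hs 1; rewrite big_ord1 H1 mulr1 (ord1 i).
have [y Hy] := Hd ord0 ord_max isT.
have v0 : v ord0 = 0.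
  pose w (i : 'I_k.+1) := v (widen_ord (leqnSn _) i) *
     (phi (widen_ord (leqnSn _) i) y - phi ord_max y).
  have wi0 : widen_ord (leqnSn k.+1) ord0 = ord0 by apply: val_inj.
  have Hd' : forall a b : 'I_k.+1, a != b ->
      exists y, phi (widen_ord (leqnSn _) a) y != phi (widen_ord (leqnSn _) b) y.
    by move=> a b ab; apply: Hd; apply: contra ab => /eqP/(congr1 val) /= ab'; apply/eqP/val_inj.
  have Hs' : forall x, \sum_i w i * phi (widen_ord (leqnSn _) i) x = 0.
    move=> x; have := Hs (y * x); rewrite big_ord_recr /= => /eqP.
    rewrite addr_eq0 => /eqP E2.
    have := Hs x; rewrite big_ord_recr /= => /eqP; rewrite addr_eq0 => /eqP E1.
    rewrite /w; under eq_bigr do rewrite mulrBr mulrBl -mulrA -Hm.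
    rewrite sumrB E2.
    under eq_bigr do rewrite mulrAC.
    rewrite -mulr_suml E1 Hm; ring.
  have := IH _ w (fun i => Hm _) (fun i => H1 _) Hd' Hs' ord0.
  rewrite /w wi0 => /eqP; rewrite mulf_eq0 subr_eq0 (negPf Hy) orbF.
  by move/eqP.
have vl : forall j : 'I_k.+1, v (lift ord0 j) = 0.
  apply: (IH (fun j => phi (lift ord0 j))) => //.
  - by move=> a b ab; apply: Hd; apply: contra ab => /eqP/lift_inj ->.
  - by move=> x; have := Hs x; rewrite big_ord_recl v0 mul0r add0r.
by case: (unliftP ord0 i) => [j ->|->].
Qed.

Lemma dim_lower (L : fieldExtType rat) m (phi : 'I_m -> L -> algC) :
  (forall i x y, phi i (x + y) = phi i x + phi i y) ->
  (forall i a x, phi i (a *: x) = ratr a * phi i x) ->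
  (forall i x y, phi i (x * y) = phi i x * phi i y) -> (forall i, phi i 1 = 1) ->
  (forall i j, i != j -> exists y, phi i y != phi j y) -> (m <= \dim {:L})%N.
Proof.
move=> Ha Hz Hm H1 Hd; rewrite leqNgt; apply/negP => lt.
set d := \dim {:L} in lt.
pose M : 'M[algC]_(m, d) := \matrix_(i, j) phi i (vbasis {:L})`_j.
have [v nzv Hv] := ker_exists M lt.
have H0 i : phi i 0 = 0 by rewrite -(scale0r 0) Hz rmorph0 mul0r.
have Hsum i (F : 'I_d -> L) : phi i (\sum_j F j) = \sum_j phi i (F j).
  by apply: (big_morph (phi i)) => [x y|]; [apply: Ha | apply: H0].
have Hs x : \sum_i v 0 i * phi i x = 0.
  rewrite (coord_vbasis (memvf x)) -/d.
  under eq_bigr do rewrite Hsum.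
  transitivity (\sum_j ratr (coord (vbasis {:L}) j x) * (v *m M) 0 j); last first.
    by rewrite Hv; apply: big1 => j _; rewrite mxE mulr0.
  under eq_bigr do rewrite mulr_sumr.
  rewrite exchange_big /=; apply: eq_bigr => j _.
  rewrite mxE mulr_sumr; apply: eq_bigr => i _.
  by rewrite mxE Hz mulrCA.
have := dedekind Hm H1 Hd Hs.
move=> H; move/eqP: nzv; apply; apply/rowP => i; rewrite mxE.
exact: H.
Qed.

Section Iter.
Variable sigma : {rmorphism algC -> algC}.
Lemma iter_plus k x y : iter k sigma (x + y) = iter k sigma x + iter k sigma y.
Proof. by elim: k => //= k ->; rewrite rmorphD. Qed.
Lemma iter_mul k x y : iter k sigma (x * y) = iter k sigma x * iter k sigma y.
Proof. by elim: k => //= k ->; rewrite rmorphM. Qed.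
Lemma iter_rat k a : iter k sigma (ratr a) = ratr a.
Proof. by elim: k => //= k ->; rewrite fmorph_rat. Qed.
Lemma iter_inj k : injective (iter k sigma).
Proof. by elim: k => // k IH x y /= /fmorph_inj /IH. Qed.
Lemma iter_lin k (I : finType) (r : I -> rat) (z : I -> algC) :
  iter k sigma (\sum_i ratr (r i) * z i) = \sum_i ratr (r i) * iter k sigma (z i).
Proof.
elim: k => //= k ->; rewrite rmorph_sum; apply: eq_bigr => i _.
by rewrite rmorphM fmorph_rat.
Qed.
End Iter.

Section Gauss.
Variables (p : nat) (zeta : algC) (gamma : 'F_p) (sigma : {rmorphism algC -> algC}).
Hypotheses (pr : prime p) (pz : p.-primitive_root zeta)
  (pg : (p.-1).-primitive_root gamma) (sz : sigma zeta = zeta ^+ gamma).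

Lemma Fp_valM (a b : 'F_p) : val (a * b) = ((val a * val b) %% p)%N.
Proof. by rewrite -val_Fp_nat // natrM !natr_Zp. Qed.

Lemma Fp_sum (F : 'F_p -> algC) : \sum_a F a = \sum_(k < p) F k%:R.
Proof.
transitivity (\sum_(a : 'F_p) F (val a)%:R); first by apply: eq_bigr => a _; rewrite natr_Zp.
rewrite -(big_mkord xpredT (fun k => F k%:R)).
by rewrite (Fp_cast pr) big_mkord.
Qed.

Lemma p_gt1' : (1 < p)%N. Proof. exact: prime_gt1. Qed.

Lemma zeta_sum : \sum_(a : 'F_p) zeta ^+ a = 0.
Proof.
rewrite Fp_sum; under eq_bigr do rewrite val_Fp_nat // (prim_expr_mod pz).
have := subrX1 zeta p; rewrite (prim_expr_order pz) subrr => /esym/eqP.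
rewrite mulf_eq0 subr_eq0 => /orP[/eqP z1|/eqP //].
have := prim_order_dvd pz 1; rewrite expr1 z1 eqxx dvdn1 => /eqP p1.
by have := p_gt1'; rewrite p1.
Qed.

Lemma gamma_nz : gamma != 0.
Proof. by rewrite (prim_root_eq0 pg) -lt0n -subn1 subn_gt0 p_gt1'. Qed.

Lemma Fp_fermat (a : 'F_p) : a != 0 -> a ^+ p.-1 = 1.
Proof.
move=> nz; apply: (mulIf nz); rewrite mul1r -exprSr prednK ?prime_gt0 //.
by have := expf_card a; rewrite card_Fp.
Qed.

Lemma Fp_val_lt (a : 'F_p) : (val a < p)%N.
Proof. by rewrite -[X in (_ < X)%N](Fp_cast pr) ltn_ord. Qed.

Lemma Fp_sum_units (F : 'F_p -> algC) :
  \sum_(a | a != 0) F a = \sum_(e < p.-1) F (gamma ^+ e).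
Proof.
have inj : {in [set: 'I_p.-1] &, injective (fun e : 'I_p.-1 => gamma ^+ e)}.
  move=> i j _ _ /eqP; rewrite (eq_prim_root_expr pg) !modn_small // => /eqP.
  exact: val_inj.
transitivity (\sum_(a in [set gamma ^+ (val e) | e : 'I_p.-1 in [set: 'I_p.-1]]) F a).
  apply: eq_bigl => a; apply/idP/imsetP => [nz|[e _ ->]]; last first.
    by rewrite expf_neq0 // gamma_nz.
  by have [e He] := prim_rootP pg (Fp_fermat nz); exists e; rewrite ?inE.
by rewrite big_imset //=; apply: eq_bigl => e; rewrite inE.
Qed.

Lemma sigma_iter_zeta k (a : 'F_p) : iter k sigma (zeta ^+ a) = zeta ^+ (gamma ^+ k * a)%R.
Proof.
elim: k => [|k IH]; first by rewrite expr0 mul1r.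
by rewrite iterS IH rmorphXn sz -exprM exprS -mulrA (Fp_valM gamma) (prim_expr_mod pz).
Qed.

Lemma sum_shift (f : nat -> algC) n : (0 < n)%N ->
  \sum_(k < n) f k = f 0%N + \sum_(k < n.-1) f k.+1.
Proof. by case: n => // n _; rewrite big_ord_recl. Qed.

Lemma zeta_indep (c : 'F_p -> rat) :
  \sum_a ratr (c a) * zeta ^+ a = 0 -> forall a, c a = c 0.
Proof.
move=> H.
pose d a := c a - c 0.
have Hd : \sum_a ratr (d a) * zeta ^+ a = 0.
  rewrite /d; under eq_bigr do rewrite rmorphB mulrBl.
  by rewrite sumrB H -mulr_sumr zeta_sum mulr0 subrr.
pose P : {poly rat} := \poly_(k < p.-1) d (k.+1)%:R.
have HP : zeta * (map_poly ratr P).[zeta] = 0.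
  have -> : map_poly (ratr : rat -> algC) P = \poly_(k < p.-1) (ratr (d (k.+1)%:R) : algC).
    apply/polyP => k; rewrite coef_map !coef_poly; case: ifP => //.
    by move=> _; rewrite raddf0.
  rewrite horner_poly mulr_sumr -[RHS]Hd Fp_sum (sum_shift (fun k : nat => ratr (d (k%:R : 'F_p)) * zeta ^+ (k%:R : 'F_p)) (prime_gt0 pr)).
  rewrite /d subrr rmorph0 mul0r add0r; apply: eq_bigr => k _.
  by rewrite val_Fp_nat // (prim_expr_mod pz) exprS mulrCA.
have nzz : zeta != 0 by rewrite (prim_root_eq0 pz) -lt0n prime_gt0.
have rootP : root (map_poly ratr P) zeta.
  by move/eqP: HP; rewrite mulf_eq0 (negPf nzz).
have [p0 [Hmin _] Hdiv] := minCpolyP zeta.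
have sp0 : size p0 = p.
  have := congr1 (fun q : {poly algC} => size q) Hmin.
  rewrite /= size_map_poly (minCpoly_cyclotomic pz) size_cyclotomic.
  by rewrite totient_prime // prednK ?prime_gt0 // => ->.
have P0 : P = 0.
  apply/eqP/negP => /negP nzP; move: rootP; rewrite Hdiv => /(dvdp_leq nzP).
  rewrite sp0 => Hle; have := leq_trans Hle (size_poly _ _).
  by rewrite leqNgt ltn_predL prime_gt0.
move=> a; apply/eqP; rewrite -subr_eq0; apply/eqP.
have [->|nza] := eqVneq a 0; first by rewrite subrr.
have va : (0 < val a)%N by rewrite lt0n; apply: contra nza => /eqP H0; apply/eqP/val_inj.
have := congr1 (fun q : {poly rat} => q`_(val a).-1) P0.
rewrite /= coef_poly coef0 prednK // -ltnS prednK ?prime_gt0 // Fp_val_lt.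
by rewrite natr_Zp.
Qed.

Lemma zeta_span (q : {poly rat}) :
  exists beta : 'F_p -> rat, (map_poly ratr q).[zeta] = \sum_a ratr (beta a) * zeta ^+ a.
Proof.
exists (fun a => \sum_(i < size q) (if (i%:R : 'F_p) == a then q`_i else 0)).
rewrite horner_coef size_map_poly; symmetry.
under eq_bigr do rewrite rmorph_sum mulr_suml.
rewrite exchange_big; apply: eq_bigr => i _.
rewrite (bigD1 (i%:R)) //= eqxx big1 ?addr0.
  by rewrite val_Fp_nat // (prim_expr_mod pz) coef_map.
by move=> a ne; rewrite eq_sym (negPf ne) rmorph0 mul0r.
Qed.

Definition eta_ (m j : nat) : algC :=
  \sum_(e < p.-1 | (e %% m == j)%N) zeta ^+ (gamma ^+ e)%R.

Lemma gauss_span m : (0 < m)%N ->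
  forall x, (exists q : {poly rat}, x = (map_poly ratr q).[zeta]) ->
  iter m sigma x = x ->
  exists a : 'rV[rat]_m, x = \sum_(j < m) ratr (a 0 j) * eta_ m j.
Proof.
move=> m0 x [q ->] Hfix.
have [beta Hb] := zeta_span q; rewrite Hb in Hfix *.
set G := gamma ^+ m.
have nzG : G != 0 by rewrite expf_neq0 // gamma_nz.
have Hs : \sum_a ratr (beta (G^-1 * a)) * zeta ^+ a = \sum_a ratr (beta a) * zeta ^+ a.
  rewrite -[RHS]Hfix iter_lin.
  under [RHS]eq_bigr do rewrite sigma_iter_zeta.
  rewrite [RHS](reindex_inj (mulfI (invr_neq0 nzG))).
  by apply: eq_bigr => a _; rewrite -/G (mulVKf nzG).
have Hc := zeta_indep (c := fun b => beta (G^-1 * b) - beta b).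
have {}Hc : forall b, beta (G^-1 * b) - beta b = beta (G^-1 * 0) - beta 0.
  apply: Hc; under eq_bigr do rewrite rmorphB mulrBl.
  by rewrite sumrB Hs subrr.
have HG b : beta (G * b) = beta b.
  have := Hc (G * b); rewrite mulr0 subrr (mulKf nzG) => /eqP.
  by rewrite subr_eq0 => /eqP.
have HGk k b : beta (G ^+ k * b) = beta b.
  by elim: k => [|k IH]; rewrite ?expr0 ?mul1r // exprS -mulrA HG IH.
have Hge (e : nat) : beta (gamma ^+ e) = beta (gamma ^+ (e %% m)).
  by rewrite {1}(divn_eq e m) exprD mulnC exprM -/G HGk.
exists (\row_j (beta (gamma ^+ j) - beta 0)).
transitivity (\sum_a ratr (beta a - beta 0) * zeta ^+ a).
  under [RHS]eq_bigr do rewrite rmorphB mulrBl.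
  by rewrite sumrB -mulr_sumr zeta_sum mulr0 subr0.
rewrite (bigD1 0) //= subrr rmorph0 mul0r add0r Fp_sum_units.
rewrite (eq_bigr (fun e : 'I_p.-1 => ratr (beta (gamma ^+ (e %% m)) - beta 0) * zeta ^+ (gamma ^+ (val e))%R)); last first.
  by move=> e _; rewrite -Hge.
rewrite /eta_; under [RHS]eq_bigr do rewrite mxE mulr_sumr.
rewrite (partition_big (fun e : 'I_p.-1 => Ordinal (ltn_pmod e m0)) xpredT) //=.
apply: eq_bigr => j _; apply: eq_big => [e|e /eqP Hej].
  by apply/eqP/eqP => [<-|H] //; apply: val_inj.
by rewrite -Hej.
Qed.
End Gauss.

Lemma Fp_part p s t (gamma : 'F_p) : prime p -> (p.-1).-primitive_root gamma ->
  coprime s p.-1 -> (0 < s)%N -> (s * t = 1 %[mod p.-1])%N ->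
  (p.-1 %/ gcdn p.-1 s.-1).-primitive_root (gamma / gamma ^+ t).
Proof.
move=> pr pg cop s0 Hst.
have nzg := gamma_nz pr pg.
have gts : gamma ^+ (t * s) = gamma.
  by rewrite -(prim_expr_mod pg) mulnC Hst (prim_expr_mod pg) expr1.
set e := gamma / gamma ^+ t.
have es : e ^+ s = gamma ^+ s.-1.
  rewrite /e exprMn exprVn -exprM gts -{1}(prednK s0) exprS mulrAC divff //.
  by rewrite mul1r.
have pm : (p.-1 %/ gcdn p.-1 s.-1).-primitive_root (e ^+ s).
  by rewrite es gcdnC; apply: exp_prim_root.
have eN : e ^+ p.-1 = 1.
  by rewrite /e exprMn exprVn -exprM mulnC exprM (prim_expr_order pg) expr1n invr1 mulr1.
have ee : (e ^+ s) ^+ t = e by rewrite -exprM -(expr_mod _ eN) Hst (expr_mod _ eN) expr1.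
rewrite -ee prim_root_exp_coprime //.
have ct : coprime t p.-1.
  have := coprime_modl (s * t) p.-1; rewrite Hst coprime_modl coprime1n.
  by rewrite coprimeMl => /esym/andP[].
by apply: coprime_dvdr ct; apply: dvdn_div; apply: dvdn_gcdl.
Qed.

Section Fp2K.
Variables (K : finFieldType) (p : nat).
Hypotheses (pr : prime p) (chK : p \in [pchar K]).
Definition Fp2K (a : 'F_p) : K := (val a)%:R.

Lemma Fp2K_mul a b : Fp2K (a * b) = Fp2K a * Fp2K b.
Proof. by rewrite /Fp2K Fp_valM // -natrM; apply/eqP; rewrite (natr_eqK chK) modn_mod. Qed.

Lemma Fp2K_inj a b : Fp2K a = Fp2K b -> a = b.
Proof.
by move/eqP; rewrite (natr_eqK chK) !modn_small ?Fp_val_lt // => /eqP /val_inj.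
Qed.

Lemma Fp2K_0 : Fp2K 0 = 0. Proof. by []. Qed.

Lemma Fp2K_1 : Fp2K 1 = 1.
Proof.
by rewrite /Fp2K; have := val_Fp_nat pr 1; rewrite modn_small ?prime_gt1 // => ->.
Qed.

Lemma Fp2K_exp a k : Fp2K (a ^+ k) = Fp2K a ^+ k.
Proof. by elim: k => [|k IH]; rewrite ?expr0 ?Fp2K_1 // !exprS Fp2K_mul IH. Qed.

Lemma Fp2K_eq1 a : (Fp2K a == 1) = (a == 1).
Proof.
by apply/eqP/eqP => [H|->]; [apply: Fp2K_inj; rewrite H Fp2K_1 | exact: Fp2K_1].
Qed.

Lemma Fp2K_neq0 a : a != 0 -> Fp2K a != 0.
Proof. by move=> nz; apply: contra nz => /eqP H; apply/eqP/Fp2K_inj; rewrite H. Qed.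
End Fp2K.

Lemma adjoin_pred (L : fieldExtType rat) (f : {rmorphism L -> algC}) (P : algC -> Prop) :
  (forall a, P (ratr a)) -> (forall x y, P x -> P y -> P (x + y)) ->
  (forall x y, P x -> P y -> P (x * y)) ->
  forall (rs : seq L) (K : {subfield L}), (forall y, y \in K -> P (f y)) ->
  (forall x, x \in rs -> P (f x)) -> forall y, y \in <<K & rs>>%VS -> P (f y).
Proof.
move=> Hr Ha Hm; elim=> [|x rs IH] K HK Hrs y; first by rewrite Fadjoin_nil; exact: HK.
rewrite adjoin_cons => Hy; apply: (IH <<K; x>>%AS) => //; last first.
  by move=> z zrs; apply: (Hrs); rewrite inE zrs orbT.
move=> z /Fadjoin_polyP[q Kq ->]; rewrite horner_coef rmorph_sum.
apply: (big_ind P) => //; first by rewrite -(rmorph0 (ratr : rat -> algC)); apply: (Hr).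
move=> i _; rewrite rmorphM rmorphXn; apply: (Hm).
  by apply: (HK); apply: (polyOverP Kq).
have Px : P (f x) by apply: (Hrs); rewrite inE eqxx.
elim: (nat_of_ord i) => [|k IHk]; last by rewrite exprS; apply: (Hm).
by rewrite expr0 -(rmorph1 (ratr : rat -> algC)); apply: (Hr).
Qed.

Unset Implicit Arguments.

Theorem proposition2p1
  (p n : nat) (K : finFieldType) (s : nat)
  (zeta : algC) (gamma : 'F_p) (sigma : {rmorphism algC -> algC}) (t : nat) :
  prime p -> p \in [pchar K] -> #|K| = (p ^ n)%N ->
  (0 < s)%N -> coprime s (p ^ n).-1 ->
  p.-primitive_root zeta ->
  (p.-1).-primitive_root gamma ->
  sigma zeta = zeta ^+ gamma ->
  (s * t = 1 %[mod p.-1])%N ->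
  let m := (p.-1 %/ gcdn p.-1 s.-1)%N in
  [/\ perm_order_on sigma (Wlist K p n s zeta) m,
      degQ (Wlist K p n s zeta) = m,
      m.-primitive_root (gamma / gamma ^+ t),
      (p = 2%N -> m = 1%N) &
      ((2 < p)%N -> (p = 1 %[mod 2 * m])%N)].
Proof.
move=> pr chK cK s0 cop pz pg sz Hst m.
have p1 := prime_gt1 pr.
have p0 := prime_gt0 pr.
have dvdN : (p.-1 %| (p ^ n).-1)%N.
  have Hp : p = (p.-1 + 1)%N by rewrite addn1 prednK.
  have : (p ^ n = 1 %[mod p.-1])%N.
    by rewrite -modnXm {1}Hp modnDl modnXm exp1n.
  by move/eqP; rewrite eqn_mod_dvd ?expn_gt0 ?p0 // subn1.
have copN : coprime s p.-1 := coprime_dvdr dvdN cop.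
have primE : m.-primitive_root (gamma / gamma ^+ t) := Fp_part pr pg copN s0 Hst.
have m0 : (0 < m)%N := prim_order_gt0 primE.
set e := gamma / gamma ^+ t in primE *.
have nzg := gamma_nz pr pg.
have gts : gamma ^+ (t * s) = gamma.
  by rewrite -(prim_expr_mod pg) mulnC Hst (prim_expr_mod pg) expr1.
pose G := @Fp2K K p gamma.
pose d := @Fp2K K p ((gamma ^+ t)^-1).
have nzd : d != 0 by apply: Fp2K_neq0 => //; rewrite invr_neq0 // expf_neq0.
have Hd : G * d ^+ s = 1.
  rewrite /G /d -(Fp2K_exp pr chK) -(Fp2K_mul pr chK) -(Fp2K_1 K pr); congr Fp2K.
  by rewrite exprVn -exprM gts divff.
have Hsig : forall u, sigma (Wsum p n s zeta u) = Wsum p n s zeta (G * d * u)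
  := W_sigma (psi_sigma pr chK cK pz sz) nzd Hd.
have cE : G * d = Fp2K K e by rewrite /G /d -(Fp2K_mul pr chK).
have nzc : G * d != 0 by rewrite mulf_neq0 // Fp2K_neq0.
have fixE k : (forall w, w \in Wlist K p n s zeta -> iter k sigma w = w) <-> (m %| k)%N.
  have H := iter_fix_iff pr chK cK pz cop s0 Hsig nzc k.
  rewrite (prim_order_dvd primE) -(Fp2K_eq1 (K:=K) pr chK) Fp2K_exp // -cE.
  by split => [/H -> //|/eqP /H].
have part1 : perm_order_on sigma (Wlist K p n s zeta) m.
  split => // [w Hw|k k0 Hk]; first by apply: (fixE m).2 (dvdnn m) w Hw.
  exact: dvdn_leq k0 ((fixE k).1 Hk).
have part4 : p = 2%N -> m = 1%N.
  by move=> p2; rewrite /m p2 gcd1n.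
have part5 : (2 < p)%N -> (p = 1 %[mod 2 * m])%N.
  move=> p2.
  have op : odd p by case: (even_prime pr) => // p2'; move: p2; rewrite p2'.
  have ep : (2 %| p.-1)%N by rewrite dvdn2 -oddS prednK.
  have os : odd s.
    rewrite -coprimen2; apply: coprime_dvdr ep _; exact: copN.
  have es : (2 %| s.-1)%N by rewrite dvdn2 -oddS prednK.
  have eg : (2 %| gcdn p.-1 s.-1)%N by rewrite dvdn_gcd ep es.
  have Hg : (m * gcdn p.-1 s.-1 = p.-1)%N by rewrite /m divnK // dvdn_gcdl.
  have Hg2 : (p = (gcdn p.-1 s.-1 %/ 2) * (2 * m) + 1)%N.
    by rewrite mulnA (divnK eg) mulnC Hg addn1 prednK.
  by rewrite {1}Hg2 modnMDl.
have part2 : degQ (Wlist K p n s zeta) = m.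
  rewrite /degQ; case: (num_field_exists _) => L [QsC [s1 Hs1 Hgen]] /=.
  pose Pr (x : algC) := (exists q : {poly rat}, x = (map_poly ratr q).[zeta]) /\
                         iter m sigma x = x.
  have PW w : w \in Wlist K p n s zeta -> Pr w.
    move=> Hw; split; last exact: (fixE m).2 (dvdnn m) w Hw.
    case/mapP: Hw => u _ ->.
    exists (\sum_(x : K) 'X^(trace_nat p n (x ^+ s - u * x))).
    have E k : (map_poly (ratr : rat -> algC) 'X^k).[zeta] = zeta ^+ k.
      by rewrite map_polyXn hornerXn.
    rewrite rmorph_sum horner_sum /Wsum /psi; apply: eq_bigr => x _.
    exact: (esym (E _)).
  have Pr_rat a : Pr (ratr a).
    by split; [exists a%:P; rewrite map_polyC hornerC | exact: iter_rat].
  have Pall y : Pr (QsC y).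
    apply: (adjoin_pred (P := Pr) _ _ _ (rs := s1) (K := 1%AS)) => //.
    - move=> x y1 [[q1 ->] H1] [[q2 ->] H2]; split; last by rewrite iter_plus H1 H2.
      by exists (q1 + q2); rewrite rmorphD hornerD.
    - move=> x y1 [[q1 ->] H1] [[q2 ->] H2]; split; last by rewrite iter_mul H1 H2.
      by exists (q1 * q2); rewrite rmorphM hornerM.
    - move=> z /vlineP[a ->]; rewrite rmorphZ_num rmorph1 mulr1; exact: Pr_rat.
    - by move=> x Hx; apply: PW; rewrite -Hs1 map_f.
    - by rewrite Hgen memvf.
  have dimU : (\dim {:L} <= m)%N.
    apply: (@dim_upper L QsC m (fun j : 'I_m => eta_ (p:=p) zeta gamma m j)) => y.
    case: (Pall y) => Hq Hf; exact: (gauss_span pr pz pg sz m0 Hq Hf).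
  have key (i j : nat) : (i < j < m)%N -> exists y : L, iter i sigma (QsC y) != iter j sigma (QsC y).
    move=> /andP[ij jm].
    have nd : ~ (m %| j - i)%N.
      move/(dvdn_leq); rewrite subn_gt0 => /(_ ij); apply/negP; rewrite -ltnNge.
      exact: leq_ltn_trans (leq_subr _ _) jm.
    case: (boolP (all (fun w => iter (j - i)%N sigma w == w) (Wlist K p n s zeta))).
      move/allP => Hall; exfalso; apply: nd; apply: (fixE (j - i)%N).1 => w Hw.
      by apply/eqP/Hall.
    case/allPn => w Hw Hne; move: Hw; rewrite -Hs1 => /mapP[y _ Dw].
    exists y; rewrite -(subnKC (ltnW ij)) iterD -Dw.
    by apply: contra Hne => /eqP /iter_inj E; rewrite /= -E.
  have dimL : (m <= \dim {:L})%N.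
    apply: (dim_lower (phi := fun (i : 'I_m) (y : L) => iter i sigma (QsC y))).
    - by move=> i x y; rewrite rmorphD iter_plus.
    - by move=> i a x; rewrite rmorphZ_num iter_mul iter_rat.
    - by move=> i x y; rewrite rmorphM iter_mul.
    - move=> i; rewrite rmorph1; have := iter_rat sigma i 1.
      by rewrite (rmorph1 (ratr : rat -> algC)).
    - move=> i j ij; case: (ltngtP i j) => [lt|gt|eq].
      + by apply: key; rewrite lt ltn_ord.
      + by have [y Hy] := key j i (introT andP (conj gt (ltn_ord i))); exists y; rewrite eq_sym.
      + by move: ij; rewrite (val_inj eq) eqxx.
  by apply/eqP; rewrite eqn_leq dimU dimL.
by split.
Qed.
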